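(* Let $M=(W,\bm{\Box},V)$ be a transitive neighborhood model and $\Sigma$ a set of formulas closed under subformulas. Then the transitive filtration $M^{T}_f=(W_f,\bm{\Box}^{T}_f,V_f)$ of $M$ through $\Sigma$ is transitive: $\bm{\Box}^{T}_fX\subseteq\bm{\Box}^{T}_f\bm{\Box}^{T}_fX$ for all $X\subseteq W_f$.
   Context: A neighborhood model is $M=(W,\bm{\Box},V)$ with $W\neq\varnothing$, $\bm{\Box}:\mathcal P(W)\to\mathcal P(W)$, $V:Var\to\mathcal P(W)$; truth sets: $|p|_M=V(p)$, $|\neg\varphi|_M=W\setminus|\varphi|_M$, $|\varphi\wedge\psi|_M=|\varphi|_M\cap|\psi|_M$, $|\Box\varphi|_M=\bm{\Box}|\varphi|_M$. $M$ is transitive if $\bm{\Box}X\subseteq\bm{\Box}\bm{\Box}X$ for all $X\subseteq W$. For $\Sigma$ closed under subformulas, $w\sim v$ iff $w,v$ satisfy the same formulas of $\Sigma$; $\widetilde w$ is the class of $w$, $W_f=\{\widetilde w:w\in W\}$, $\widetilde X=\{\widetilde w:w\in X\}$, $V_f(p)=\widetilde{|p|}_M$. The minimal filtration has $\bm{\Box}^{-}_fX=\widetilde{|\Box\varphi|}_M$ if $X=\widetilde{|\varphi|}_M$ for some formula $\Box\varphi\in\Sigma$, and $\bm{\Box}^{-}_fX=\varnothing$ otherwise. For a function $\bm{\Box}':\mathcal P(U)\to\mathcal P(U)$, $\widehat{\bm{\Box}'}X=X$ if $X=\bm{\Box}'Y$ for some $Y\subseteq U$, and $\varnothing$ otherwise.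 The transitive filtration is $M^{T}_f=(W_f,\bm{\Box}^{T}_f,V_f)$ with $\bm{\Box}^{T}_fX=\bm{\Box}^{-}_fX\cup\widehat{\bm{\Box}^{-}_f}X$. *)

(* Defs.v *)
Set Implicit Arguments.

Inductive form : Type :=
| fvar : nat -> form
| fneg : form -> form
| fand : form -> form -> form
| fbox : form -> form.

Record nmodel : Type := NModel {
  nW : Type;
  nW_inhabited : inhabited nW;
  nbox : (nW -> Prop) -> (nW -> Prop);
  nval : nat -> nW -> Prop
}.

Definition subset {T : Type} (A B : T -> Prop) : Prop := forall x, A x -> B x.

Fixpoint truth (M : nmodel) (phi : form) : nW M -> Prop :=
  match phi with
  | fvar p => nval M p
  | fneg a => fun w => ~ truth M a w
  | fand a b => fun w => truth M a w /\ truth M b w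
  | fbox a => nbox M (truth M a)
  end.

Definition transitive_box {U : Type} (B : (U -> Prop) -> (U -> Prop)) : Prop :=
  forall X : U -> Prop, subset (B X) (B (B X)).

Definition transitive_model (M : nmodel) : Prop := transitive_box (nbox M).

(* Sigma closed under (immediate, hence all) subformulas *)
Definition subformula_closed (Sigma : form -> Prop) : Prop :=
  (forall a, Sigma (fneg a) -> Sigma a) /\
  (forall a b, Sigma (fand a b) -> Sigma a /\ Sigma b) /\
  (forall a, Sigma (fbox a) -> Sigma a).

Section Filtration.
Variables (M : nmodel) (Sigma : form -> Prop).

Definition sim (w v : nW M) : Prop :=
  forall phi, Sigma phi -> (truth M phi w <-> truth M phi v).

Definition cls (w : nW M) : nW M -> Prop := sim w.

Definition Wf : Type := { C : nW M -> Prop | exists w, C = cls w }.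

Definition tilde (X : nW M -> Prop) : Wf -> Prop :=
  fun c => exists w, X w /\ proj1_sig c = cls w.

Definition Vf (p : nat) : Wf -> Prop := tilde (nval M p).

(* minimal filtration: Box^-_f X = |Box phi|~ if X = |phi|~ with Box phi in Sigma,
   and the empty set otherwise (well-definedness of the first case is a
   standard fact, so the case is written as an existential). *)
Definition box_min (X : Wf -> Prop) : Wf -> Prop :=
  fun c => exists phi, Sigma (fbox phi) /\ X = tilde (truth M phi)
                       /\ tilde (truth M (fbox phi)) c.

End Filtration.

Definition hat {U : Type} (B' : (U -> Prop) -> (U -> Prop)) (X : U -> Prop)
  : U -> Prop :=
  fun c => (exists Y, X = B' Y) /\ X c.

Definition box_T (M : nmodel) (Sigma : form -> Prop) (X : Wf M Sigma -> Prop)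
  : Wf M Sigma -> Prop :=
  fun c => @box_min M Sigma X c \/ hat (@box_min M Sigma) X c.
Arguments box_min M Sigma X c : clear implicits.
Arguments box_T M Sigma X c : clear implicits.

(* Main.v *)
Require Import Defs.
From Stdlib Require Import Classical FunctionalExtensionality PropExtensionality.

Lemma set_ext {T : Type} (A B : T -> Prop) : (forall x, A x <-> B x) -> A = B.
Proof. intro H. apply functional_extensionality; intro x. apply propositional_extensionality; auto. Qed.

Lemma tilde_sat (M : nmodel) (Sigma : form -> Prop) psi (c : Wf M Sigma) w :
  Sigma psi -> proj1_sig c = cls M Sigma w ->
  (@tilde M Sigma (truth M psi) c <-> truth M psi w).
Proof.
  intros Hs Hc; split.
  - intros [v [Hv Hcv]]. rewrite Hc in Hcv.
    assert (Hsv : cls M Sigma w v).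
    { rewrite Hcv. unfold cls, sim. intros; tauto. }
    apply (Hsv psi Hs). exact Hv.
  - intro H. exists w; split; auto.
Qed.

Lemma truth_ext (M : nmodel) (Sigma : form -> Prop) psi psi' :
  Sigma psi -> Sigma psi' ->
  @tilde M Sigma (truth M psi) = @tilde M Sigma (truth M psi') ->
  truth M psi = truth M psi'.
Proof.
  intros H1 H2 He. apply set_ext; intro w.
  set (c0 := exist (fun C => exists w, C = cls M Sigma w) (cls M Sigma w) (ex_intro _ w eq_refl) : Wf M Sigma).
  rewrite <- (tilde_sat M Sigma psi c0 w H1 eq_refl).
  rewrite <- (tilde_sat M Sigma psi' c0 w H2 eq_refl).
  rewrite He. tauto.
Qed.

Lemma rep (M : nmodel) (Sigma : form -> Prop) :
  subformula_closed Sigma ->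
  forall (Z X : Wf M Sigma -> Prop) c, X = box_min M Sigma Z -> X c ->
  exists phi, Sigma (fbox phi) /\ forall d, X d <-> @tilde M Sigma (truth M (fbox phi)) d.
Proof.
  intros [_ [_ Hb]] Z X c HX Hc. subst X.
  destruct Hc as [phi [Hs [HZ Hc]]].
  exists phi; split; auto. intro d; split.
  - intros [phi' [Hs' [HZ' Hd]]].
    rewrite HZ in HZ'.
    pose proof (truth_ext M Sigma phi phi' (Hb _ Hs) (Hb _ Hs') HZ') as E.
    simpl in *. rewrite E. exact Hd.
  - intro Hd. exists phi; auto.
Qed.

Lemma box_T_range (M : nmodel) (Sigma : form -> Prop) :
  transitive_model M -> subformula_closed Sigma ->
  forall X, exists Y, box_T M Sigma X = box_min M Sigma Y.
Proof.
  intros HT HS X.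
  destruct (classic (exists Z, X = box_min M Sigma Z)) as [[Z HZ] | Hn].
  - destruct (classic (exists psi, Sigma (fbox psi) /\ X = @tilde M Sigma (truth M psi)))
      as [[psi [Hps HXp]] | Hnr].
    + assert (Hsub : forall d, X d -> box_min M Sigma X d).
      { intros d Hd.
        destruct (rep M Sigma HS Z X d HZ Hd) as [phi [Hphi Heq]].
        destruct HS as [_ [_ Hb]].
        assert (E : truth M psi = truth M (fbox phi)).
        { apply truth_ext with (Sigma := Sigma); auto.
          rewrite <- HXp. apply set_ext. exact Heq. }
        exists psi; split; auto; split; auto.
        apply Heq in Hd. destruct Hd as [w [Hw Hdw]].
        exists w; split; auto. simpl. rewrite E. simpl in *. apply HT. exact Hw. }
      exists X. apply set_ext; intro d; split.
      * intros [H | [_ H]]; auto.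
      * intro H; left; exact H.
    + exists Z. rewrite <- HZ. apply set_ext; intro d; split.
      * intros [H | [_ H]]; auto.
        exfalso. destruct H as [phi [Hs [HX _]]]. apply Hnr. eauto.
      * intro H; right; split; eauto.
  - exists X. apply set_ext; intro d; split.
    + intros [H | [H _]]; auto. exfalso; auto.
    + intro H; left; exact H.
Qed.

Theorem mainTheorem7 (M : nmodel) (Sigma : form -> Prop) :
  transitive_model M -> subformula_closed Sigma ->
  forall X : Wf M Sigma -> Prop,
    subset (box_T M Sigma X) (box_T M Sigma (box_T M Sigma X)).
Proof.
  intros HT HS X c Hc.
  destruct (box_T_range M Sigma HT HS X) as [Y HY].
  right. split; [exists Y; exact HY | exact Hc].
Qed.
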